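(* Let $F$ be a number field, $v$ a non-archimedean place of $F$, and $(m,u)\in\mathcal{O}_F\times\mathcal{O}_F^\times$ with $m^2-4u\notin F^2$. Let $\gamma_{m,u}=\begin{pmatrix}0&1\\-u&m\end{pmatrix}$ and let $\mathrm{G}_{\gamma_{m,u}}(F_v)$ be its centralizer in $\mathrm{GL}_2(F_v)$. If there is $\alpha\in F_v$ with $\alpha^2-m\alpha+u=0$, let $\alpha_1,\alpha_2$ be the roots of $x^2-mx+u$ in $F_v$; then \[ \left\{\begin{pmatrix}1&u^{-1}\alpha_i\\ \alpha_i&1\end{pmatrix}: i\in\{1,2\}\right\}\cup\left\{\begin{pmatrix}1&x\\ \alpha_i&0\end{pmatrix}: x\in F_v^\times,\ i\in\{1,2\}\right\}\cup\left\{\begin{pmatrix}1&x\\0&y\end{pmatrix}: x\in F_v,\ y\in F_v^\times\right\} \] is a set of representatives of $\mathrm{G}_{\gamma_{m,u}}(F_v)\backslash\mathrm{GL}_2(F_v)$. If there is no $\alpha\in F_v$ with $\alpha^2-m\alpha+u=0$, then $\left\{\begin{pmatrix}1&x\\0&y\end{pmatrix}: x\in F_v,\ y\in F_v^\times\right\}$ is a set of representatives of $\mathrm{G}_{\gamma_{m,u}}(F_v)\backslash\mathrm{GL}_2(F_v)$.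
   Context: $F_v$ is the completion of $F$ at $v$ and $\mathcal{O}_F$ the ring of integers of $F$. *)

(* Defs.v *)
From HB Require Import structures.
From mathcomp Require Import all_boot all_order all_algebra all_field.
From mathcomp Require Import reals.
Set Implicit Arguments. Unset Strict Implicit. Unset Printing Implicit Defensive.
Import Order.TTheory GRing.Theory Num.Theory.
Local Open Scope ring_scope.

Definition is_absval (T : fieldType) (R : realType) (f : T -> R) : Prop :=
  [/\ forall x, 0 <= f x,
      forall x, f x = 0 <-> x = 0,
      forall x y, f (x * y) = f x * f y &
      forall x y, f (x + y) <= f x + f y].

Definition non_archimedean (T : fieldType) (R : realType) (f : T -> R) : Prop :=
  forall x y, f (x + y) <= Num.max (f x) (f y).

Definition nontrivial_absval (T : fieldType) (R : realType) (f : T -> R) : Prop :=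
  exists x, x != 0 /\ f x != 1.

(* A non-archimedean place of F, given by a representative absolute value. *)
Definition nonarch_place (T : fieldType) (R : realType) (f : T -> R) : Prop :=
  [/\ is_absval f, non_archimedean f & nontrivial_absval f].

Definition absval_complete (T : fieldType) (R : realType) (f : T -> R) : Prop :=
  forall s : nat -> T,
    (forall e : R, 0 < e -> exists N : nat, forall n k : nat,
        (N <= n)%N -> (N <= k)%N -> f (s n - s k) < e) ->
    exists l : T, forall e : R, 0 < e -> exists N : nat, forall n : nat,
        (N <= n)%N -> f (s n - l) < e.

Definition is_completion (F : fieldType) (K : fieldType) (R : realType)
    (absF : F -> R) (iota : {rmorphism F -> K}) (absK : K -> R) : Prop :=
  [/\ is_absval absK,
      forall x, absK (iota x) = absF x,
      absval_complete absK &
      forall (x : K) (e : R), 0 < e -> exists y : F, absK (x - iota y) < e].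

Definition is_algint (F : fieldType) (x : F) : Prop :=
  exists p : {poly int}, p \is monic /\ root (map_poly (fun z : int => z%:~R) p) x.

Definition is_algint_unit (F : fieldType) (x : F) : Prop :=
  [/\ is_algint x, x != 0 & is_algint x^-1].

Definition mx2 (K : fieldType) (a b c d : K) : 'M[K]_2 :=
  \matrix_(i < 2, j < 2)
    if (i == 0 :> nat) then (if (j == 0 :> nat) then a else b)
    else (if (j == 0 :> nat) then c else d).

Definition gamma_mu (K : fieldType) (m u : K) : 'M[K]_2 := mx2 0 1 (- u) m.

Definition centralizer_GL2 (K : fieldType) (g : 'M[K]_2) (h : 'M[K]_2) : Prop :=
  h \in unitmx /\ h *m g = g *m h.

Definition right_coset_reps (K : fieldType) (H S : 'M[K]_2 -> Prop) : Prop :=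
  [/\ forall s, S s -> s \in unitmx,
      forall g, g \in unitmx -> exists s, S s /\ exists h, H h /\ g = h *m s &
      forall s1 s2, S s1 -> S s2 -> (exists h, H h /\ s1 = h *m s2) -> s1 = s2].

Definition reps_split (K : fieldType) (m u : K) (g : 'M[K]_2) : Prop :=
  (exists a : K, a ^+ 2 - m * a + u = 0 /\
     (g = mx2 1 (u^-1 * a) a 1 \/ exists x : K, x != 0 /\ g = mx2 1 x a 0))
  \/ (exists x y : K, y != 0 /\ g = mx2 1 x 0 y).

Definition reps_nonsplit (K : fieldType) (g : 'M[K]_2) : Prop :=
  exists x y : K, y != 0 /\ g = mx2 1 x 0 y.

(* Main.v *)
Require Import Defs.
From HB Require Import structures.
From mathcomp Require Import all_boot all_order all_algebra all_field.
From mathcomp Require Import reals ring.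
Import Order.TTheory GRing.Theory Num.Theory.
Local Open Scope ring_scope.

Section S.
Variable K : fieldType.
Lemma mx2E (g : 'M[K]_2) : g = mx2 (g 0 0) (g 0 1) (g 1 0) (g 1 1).
Proof.
apply/matrixP => i j; rewrite !mxE.
case: i => [[|[|i]] Hi]; case: j => [[|[|j]] Hj] //=; by congr (g _ _); apply: val_inj.
Qed.
Lemma mx2_mul (a b c d a' b' c' d' : K) : mx2 a b c d *m mx2 a' b' c' d' =
  mx2 (a*a' + b*c') (a*b' + b*d') (c*a'+d*c') (c*b'+d*d').
Proof.
apply/matrixP => i j; rewrite !mxE !big_ord_recr big_ord0 /= !mxE /= add0r.
by case: i => [[|[|i]] Hi]; case: j => [[|[|j]] Hj].
Qed.
Lemma mx2_eq (a b c d a' b' c' d' : K) : mx2 a b c d = mx2 a' b' c' d' ->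
  [/\ a = a', b = b', c = c' & d = d'].
Proof.
move=> E; split; [move: (congr1 (fun M : 'M[K]_2 => M 0 0) E)|move: (congr1 (fun M : 'M[K]_2 => M 0 1) E)
 |move: (congr1 (fun M : 'M[K]_2 => M 1 0) E)|move: (congr1 (fun M : 'M[K]_2 => M 1 1) E)]; by rewrite !mxE.
Qed.
Lemma det_mx2 (a b c d : K) : \det (mx2 a b c d) = a*d - b*c.
Proof.
rewrite (expand_det_row _ 0) !big_ord_recr big_ord0 /= add0r /cofactor !det_mx11 !mxE /=.
by rewrite !add0n expr0 expr1; ring.
Qed.


Lemma unit_mx2 (a b c d : K) : (mx2 a b c d \in unitmx) = (a*d - b*c != 0).
Proof. by rewrite unitmxE unitfE det_mx2. Qed.

Lemma lin_eq (x y l r : K) : l = r -> x - y = l - r -> x = y.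
Proof. by move=> e d; apply/eqP; rewrite -subr_eq0 d e subrr. Qed.
Arguments lin_eq [x y l r].

Variables m u : K.
Hypothesis hu : u != 0.
Hypothesis hD : m ^+ 2 - 4%:R * u != 0.

Lemma cent_mx2 (a b : K) : centralizer_GL2 (gamma_mu m u) (mx2 a b (-u*b) (a + b * m))
  <-> a*(a+b * m) - b*(-u*b) != 0.
Proof.
rewrite /centralizer_GL2 unit_mx2 /gamma_mu !mx2_mul; split; first by case.
by move=> H; split=> //; congr mx2; ring.
Qed.

Lemma cent_form (h : 'M[K]_2) : centralizer_GL2 (gamma_mu m u) h ->
  exists a b, h = mx2 a b (-u*b) (a + b * m) /\ a*(a+b * m) - b*(-u*b) != 0.
Proof.
rewrite (mx2E h); move: (h 0 0) (h 0 1) (h 1 0) (h 1 1) => p q r s.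
case=> Hu E; exists p, q.
move: E; rewrite /gamma_mu !mx2_mul => /mx2_eq [e1 e2 e3 e4].
have er : r = - u * q by apply: (lin_eq (esym e1)); ring.
have es : s = p + q * m by apply: (lin_eq (esym e2)); ring.
by rewrite er es; split=> //; move: Hu; rewrite unit_mx2 er es.
Qed.

Lemma exist_T (c1 c2 d1 d2 : K) : c1*d2 - d1*c2 != 0 ->
  c2^+2 - m*c1*c2 + u*c1^+2 != 0 ->
  exists x y, y != 0 /\ exists h, centralizer_GL2 (gamma_mu m u) h /\
     mx2 c1 d1 c2 d2 = h *m mx2 1 x 0 y.
Proof.
move=> hdet hQ.
pose b := - c2 / u.
pose N := (c2^+2 - m*c1*c2 + u*c1^+2)/u.
exists ((d1*(c1 + b * m) - b*d2)/N), ((c1*d2 + u*b*d1)/N).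
split.
  have -> : (c1*d2 + u*b*d1)/N = (c1*d2 - d1*c2) * u / (c2^+2 - m*c1*c2 + u*c1^+2).
    by rewrite /N /b; field; rewrite hQ hu.
  by rewrite mulf_neq0 ?invr_eq0 // mulf_neq0.
exists (mx2 c1 b (-u*b) (c1 + b * m)); split.
  apply/cent_mx2.
  have -> : c1 * (c1 + b * m) - b * (- u * b) = (c2^+2 - m*c1*c2 + u*c1^+2)/u.
    by rewrite /b; field.
  by rewrite mulf_neq0 ?invr_eq0.
rewrite mx2_mul /N /b; congr mx2; field; rewrite ?hQ ?hu //.
Qed.

Lemma root_neq0 (al : K) : al ^+ 2 - m * al + u = 0 -> al != 0.
Proof.
move=> e; apply/eqP => al0; move: e; rewrite al0 expr0n /= mulr0 subrr add0r.
by move/eqP; rewrite (negbTE hu).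
Qed.

Lemma first_col (a b al : K) : al ^+ 2 - m * al + u = 0 ->
  - u * b * 1 + (a + b * m) * al = (a * 1 + b * al) * al.
Proof.
move=> e; apply/eqP; rewrite -subr_eq0; apply/eqP.
transitivity (- b * (al ^+ 2 - m * al + u)); first ring.
by rewrite e mulr0.
Qed.

Lemma uniq_split (s1 s2 h : 'M[K]_2) : reps_split m u s1 -> reps_split m u s2 ->
  centralizer_GL2 (gamma_mu m u) h -> s1 = h *m s2 -> s1 = s2.
Proof.
move=> R1 R2 /cent_form [a [b [-> hdet]]] E.
case: R2 => [[al2 [hal2 R2]] | [x2 [y2 [hy2 E2]]]].
  have E2 : exists x2 y2, s2 = mx2 1 x2 al2 y2 /\
     ((x2 = u^-1 * al2 /\ y2 = 1) \/ (x2 != 0 /\ y2 = 0)).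
    case: R2 => [->|[x2 [hx2 ->]]]; first by exists (u^-1 * al2), 1; split=> //; left.
    by exists x2, 0; split=> //; right.
  case: E2 => x2 [y2 [E2 C2]]; rewrite E2 in E.
  case: R1 => [[al1 [hal1 R1]] | [x1 [y1 [hy1 E1]]]].
    have E1 : exists x1 y1, s1 = mx2 1 x1 al1 y1 /\
       ((x1 = u^-1 * al1 /\ y1 = 1) \/ (x1 != 0 /\ y1 = 0)).
      case: R1 => [->|[x1 [hx1 ->]]]; first by exists (u^-1 * al1), 1; split=> //; left.
      by exists x1, 0; split=> //; right.
    case: E1 => x1 [y1 [E1 C1]]; rewrite E1 in E.
    move: E; rewrite mx2_mul => /mx2_eq [e1 e2 e3 e4].
    have eal : al1 = al2 by rewrite e3 first_col // -e1 mul1r.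
    move: E1 C1 e2 e4; rewrite eal => E1 C1 e2 e4.
    case: C1 => [[ex1 ey1] | [hx1 ey1]]; case: C2 => [[ex2 ey2] | [hx2 ey2]].
    - by rewrite E1 E2 ex1 ey1 ex2 ey2.
    - exfalso; move: hx2 => /eqP; apply.
      rewrite ex1 ey1 ey2 in e2 e4.
      have hu2 : u * x2 = u * x2 * (a * 1 + b * al2) by rewrite -e1 mulr1.
      move: hu2; rewrite !mulr0 !addr0 in e2; rewrite !mulr0 !addr0 in e4.
      have -> : u * x2 * (a * 1 + b * al2) = u * (a * x2) + (u * b * x2) * al2 by ring.
      rewrite -e2 mulrA mulfV // mul1r.
      have -> : u * b * x2 = - (- u * b * x2) by ring.
      rewrite -e4 mulN1r addrN => /eqP; rewrite mulf_eq0 (negbTE hu) /= => /eqP.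
      by [].
    - exfalso; move: hdet => /eqP; apply.
      rewrite ey1 ex2 ey2 in e2 e4.
      have -> : a * (a + b * m) - b * (- u * b) = (a * 1 + b * al2) *
          (- u * b * (u^-1 * al2) + (a + b * m) * 1) + b ^+ 2 * (al2 ^+ 2 - m * al2 + u).
        by field.
      by rewrite -e4 hal2; ring.
    - rewrite ey1 ey2 in e2 e4.
      move: e4 e2; rewrite !mulr0 !addr0 => e4.
      have b0 : b = 0.
        by move/eqP: e4; rewrite eq_sym !mulf_eq0 oppr_eq0 (negbTE hu) (negbTE hx2) orbF /= => /eqP.
      move: e1; rewrite b0 mul0r addr0 mulr1 => <-; rewrite mul1r => ex.
      by rewrite E1 E2 ex ey1 ey2.
  move: E; rewrite E1 mx2_mul => /mx2_eq [e1 e2 e3 e4].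
  rewrite first_col // -e1 mul1r in e3.
  by move: (root_neq0 _ hal2); rewrite -e3 eqxx.
rewrite E2 in E *.
case: R1 => [[al1 [hal1 R1]] | [x1 [y1 [hy1 E1]]]].
  have E1 : exists x1 y1, s1 = mx2 1 x1 al1 y1.
    by case: R1 => [->|[x1 [hx1 ->]]]; [exists (u^-1 * al1), 1 | exists x1, 0].
  case: E1 => x1 [y1 E1]; rewrite E1 in E *.
  move: E; rewrite mx2_mul => /mx2_eq [e1 e2 e3 e4].
  exfalso; move: hdet => /eqP; apply.
  apply: (mulfI hu); rewrite mulr0.
  have -> : u * (a * (a + b * m) - b * (- u * b)) =
     u * (a * 1 + b * 0) ^+ 2 - (a * 1 + b * 0) * m * (- u * b * 1 + (a + b * m) * 0)
     + (- u * b * 1 + (a + b * m) * 0) ^+ 2 by ring.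
  by rewrite -e1 -e3 -hal1; ring.
rewrite E1 in E *.
move: E; rewrite mx2_mul => /mx2_eq [e1 e2 e3 e4].
move: e3; rewrite !mulr0 !addr0 mulr1 => /eqP; rewrite eq_sym mulf_eq0 oppr_eq0 (negbTE hu) /= => /eqP b0.
rewrite b0 in e1 e2 e4.
have ha : a = 1 by apply: (lin_eq (esym e1)); ring.
by rewrite e2 e4 ha; congr mx2; ring.
Qed.
End S.

Section S2.
Variable K : fieldType.
Lemma exist_split (r r' c1 p q : K) : r != r' -> r != 0 -> r' != 0 -> c1 != 0 -> q != 0 ->
  exists s, reps_split (r + r') (r* r') s /\ exists h,
    centralizer_GL2 (gamma_mu (r + r') (r* r')) h /\
    mx2 c1 (p+q) (r* c1) (r* p + r'* q) = h *m s.
Proof.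
move=> hrr hr hr' hc1 hq.
have hrr2 : r - r' != 0 by rewrite subr_eq0.
have hrr3 : r' - r != 0 by rewrite subr_eq0 eq_sym.
have [->|hp] := eqVneq p 0.
  pose b := (c1 - q* r')/(r - r').
  pose a := c1 - b* r.
  exists (mx2 1 ((r* r')^-1 * r) r 1); split.
    by left; exists r; split; [ring | left].
  exists (mx2 a b (-(r* r')* b) (a + b* (r+r'))); split.
    apply/cent_mx2.
    have -> : a * (a + b * (r + r')) - b * (- (r * r') * b) = c1 * (q* r').
      by rewrite /a /b; field; rewrite ?hrr2 ?hrr3.
    by rewrite !mulf_neq0.
  rewrite mx2_mul /a /b; congr mx2; field; rewrite ?hrr2 ?hrr3 ?hr ?hr' ?hc1 ?hq //.
pose mu := -(q* r'* c1)/(p* r).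
pose b := (c1 - mu)/(r - r').
pose a := c1 - b* r.
pose x := p* (r'-r)/(c1* r').
exists (mx2 1 x r 0); split.
  left; exists r; split; first ring.
  by right; exists x; split => //; rewrite /x !mulf_neq0 ?invr_eq0 ?mulf_neq0.
exists (mx2 a b (-(r* r')* b) (a + b* (r+r'))); split.
  apply/cent_mx2.
  have -> : a * (a + b * (r + r')) - b * (- (r * r') * b) = c1 * mu.
    by rewrite /a /b; field; rewrite ?hrr2 ?hrr3.
  by rewrite /mu !mulf_neq0 ?oppr_eq0 ?invr_eq0 ?mulf_neq0.
rewrite mx2_mul /a /b /mu /x; congr mx2; field; rewrite ?hrr2 ?hrr3 ?hr ?hr' ?hc1 ?hq ?hp //.
Qed.
End S2.

Section S3.
Variable K : fieldType.
Variables m u : K.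
Hypothesis hu : u != 0.
Hypothesis hD : m ^+ 2 - 4%:R * u != 0.

Lemma reps_unit s : reps_split m u s -> s \in unitmx.
Proof.
case=> [[al [hal [->|[x [hx ->]]]]] | [x [y [hy ->]]]]; rewrite unit_mx2.
- apply/negP => /eqP H0.
  have e : al ^+ 2 - u = 0.
    have -> : al ^+ 2 - u = - u * (1 * 1 - u^-1 * al * al) by field.
    by rewrite H0 mulr0.
  move: hD => /eqP; apply; apply: (mulfI hu); rewrite mulr0.
  have -> : u * (m ^+ 2 - 4%:R * u) = (-(al ^+ 2 - m * al + u) + (al ^+ 2 - u)) *
     (m * al + 2%:R * u) - m ^+ 2 * (al ^+ 2 - u) by ring.
  by rewrite hal e; ring.
- rewrite mulr0 sub0r oppr_eq0 mulf_neq0 //.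
  exact: (@root_neq0 K m u hu al hal).
- by rewrite mulr0 subr0 mul1r.
Qed.

Lemma exists_rep (g : 'M[K]_2) (split : bool) :
  (split -> exists a, a ^+ 2 - m * a + u = 0) ->
  (~~ split -> ~ exists a, a ^+ 2 - m * a + u = 0) ->
  g \in unitmx -> exists s, (if split then reps_split m u s else reps_nonsplit s) /\
   exists h, centralizer_GL2 (gamma_mu m u) h /\ g = h *m s.
Proof.
move=> Hs Hns; rewrite (@mx2E K g) unit_mx2.
move: (g 0 0) (g 0 1) (g 1 0) (g 1 1) => c1 d1 c2 d2 hdet.
have [hQ|hQ] := eqVneq (c2^+2 - m*c1*c2 + u*c1^+2) 0; last first.
  have [x [y [hy [h [Gh E]]]]] := @exist_T K m u hu _ _ _ _ hdet hQ.
  exists (mx2 1 x 0 y); split; last by exists h.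
  by case: split {Hs Hns}; [right|]; exists x, y.
have hc1 : c1 != 0.
  apply/negP => /eqP c10; move: hQ hdet; rewrite c10 expr0n /= !mulr0 mul0r subr0 addr0.
  by move/eqP; rewrite expf_eq0 /= => /eqP ->; rewrite mulr0 mul0r subrr eqxx.
pose r := c2 / c1.
have hr : r ^+ 2 - m * r + u = 0.
  have -> : r ^+ 2 - m * r + u = (c2^+2 - m*c1*c2 + u*c1^+2) / c1 ^+ 2 by rewrite /r; field.
  by rewrite hQ mul0r.
case: split Hs Hns => Hs Hns; last by exfalso; apply: (Hns isT); exists r.
have Em : m = r + (m - r) by ring.
have Eu : u = r * (m - r) by apply: (@lin_eq K _ _ _ _ hr); ring.
have hDr : m ^+ 2 - 4%:R * u = (r - (m - r)) ^+ 2 by rewrite Eu; ring.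
have hrr : r != m - r.
  by rewrite -subr_eq0; apply/negP => /eqP e; move: hD; rewrite hDr e expr0n eqxx.
have hrr2 : (m - r) - r != 0 by rewrite subr_eq0 eq_sym.
have hr0 : r != 0 by move: hu; rewrite Eu mulf_eq0 negb_or => /andP [].
have hr0' : m - r != 0 by move: hu; rewrite Eu mulf_eq0 negb_or => /andP [].
pose q := (d2 - r * d1) / ((m - r) - r).
pose p := d1 - q.
have ec2 : c2 = r * c1 by rewrite /r; field.
have ed1 : d1 = p + q by rewrite /p; ring.
have ed2 : d2 = r * p + (m - r) * q by rewrite /p /q; field.
have hq : q != 0.
  apply/negP => /eqP q0; move: hdet.
  have -> : c1 * d2 - d1 * c2 = c1 * q * ((m - r) - r) by rewrite ec2 /q; field.
  by rewrite q0 mulr0 mul0r eqxx.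
have [s [Rs [h [Gh E]]]] := @exist_split K r (m - r) c1 p q hrr hr0 hr0' hc1 hq.
rewrite -Em -Eu in Rs Gh.
exists s; split => //; exists h; split => //.
by rewrite ec2 ed1 ed2.
Qed.

Lemma main_K : let G := centralizer_GL2 (gamma_mu m u) in
  ((exists a : K, a ^+ 2 - m * a + u = 0) -> right_coset_reps G (reps_split m u)) /\
  (~ (exists a : K, a ^+ 2 - m * a + u = 0) -> right_coset_reps G (@reps_nonsplit K)).
Proof.
move=> G; split => Hex; split.
- exact: reps_unit.
- by move=> g hg; apply: (exists_rep g true) => // _; exact: Hex.
- by move=> s1 s2 R1 R2 [h [Gh E]]; apply: (@uniq_split K m u hu _ _ h R1 R2 Gh E).
- by move=> s [x [y [hy ->]]]; apply: reps_unit; right; exists x, y.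
- by move=> g hg; apply: (exists_rep g false).
- move=> s1 s2 R1 R2 [h [Gh E]]; apply: (@uniq_split K m u hu _ _ h _ _ Gh E); by right.
Qed.
End S3.

Theorem lemma3p5 (R : realType) (F : fieldExtType rat) (absF : F -> R)
  (K : fieldType) (iota : {rmorphism F -> K}) (absK : K -> R)
  (m u : F) :
  nonarch_place absF ->
  is_completion absF iota absK ->
  is_algint m -> is_algint_unit u ->
  ~ (exists s : F, s ^+ 2 = m ^+ 2 - 4%:R * u) ->
  let mv := iota m in let uv := iota u in
  let G := centralizer_GL2 (gamma_mu mv uv) in
  ((exists a : K, a ^+ 2 - mv * a + uv = 0) ->
     right_coset_reps G (reps_split mv uv)) /\
  (~ (exists a : K, a ^+ 2 - mv * a + uv = 0) ->
     right_coset_reps G (@reps_nonsplit K)).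
Proof.
move=> _ _ _ [_ hu0 _] hsq mv uv G.
have hu : uv != 0 by rewrite /uv fmorph_eq0.
have hD : mv ^+ 2 - 4%:R * uv != 0.
  have -> : mv ^+ 2 - 4%:R * uv = iota (m ^+ 2 - 4%:R * u).
    by rewrite rmorphB rmorphXn rmorphM rmorph_nat.
  rewrite fmorph_eq0; apply/eqP => e; apply: hsq; exists 0.
  by rewrite expr0n /= e.
exact: (@main_K K mv uv hu hD).
Qed.
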